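(* In the Gödel setting described in the context, let $(A,B,R)$ be a $\top$-normalized fuzzy context and $(g,f)\in\mathcal{F}_N$ such that for every $a\in A$ there exists $b\in B$ with $g(b)>R(a,b)$. Then $f^{\downarrow}(b)\le g^{\uparrow\downarrow}(b)$ for all $b\in B$; consequently, in the fuzzy concept lattice, $\langle f^{\downarrow},f^{\downarrow\uparrow}\rangle\preceq\langle g^{\uparrow\downarrow},g^{\uparrow}\rangle$.
   Context: Gödel setting: all truth-value sets are $[0,1]$ with the usual order, $x\&y=\min\{x,y\}$, and $z\swarrow y=z\nwarrow y$ equals $1$ if $y\le z$ and $z$ otherwise. A fuzzy context is $(A,B,R)$ with nonempty finite sets $A,B$ and $R\colon A\times B\to[0,1]$. For $g\colon B\to[0,1]$, $f\colon A\to[0,1]$: $g^{\uparrow}(a)=\inf_{b\in B}(R(a,b)\swarrow g(b))$, $f^{\downarrow}(b)=\inf_{a\in A}(R(a,b)\nwarrow f(a))$, $g^{\uparrow_N}(a)=\inf_{b\in B}(g(b)\swarrow R(a,b))$, $f^{\downarrow^N}(b)=\inf_{a\in A}(f(a)\nwarrow R(a,b))$, $g^{\uparrow_\pi}(a)=\sup_{b\in B}\min\{R(a,b),g(b)\}$. $\mathcal{F}_N=\{(g,f)\mid g^{\uparrow_N}=f,\ f^{\downarrow^N}=g\}$. A (fuzzy) concept is a pair $\langle g,f\rangle$ with $g^\uparrow=f$, $f^\downarrow=g$, ordered by $\langle g_1,f_1\rangle\preceq\langle g_2,f_2\rangle$ iff $g_1\le g_2$ pointwise. The context is normalized if no row $R(a,\cdot)$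 and no column $R(\cdot,b)$ is identically $0$, and no row and no column has all values different from $0$; it is $\top$-normalized if moreover for every $a\in A$ there is $b_a\in B$ with $R(a,b_a)=1$. *)

(* Defs.v *)
(* truth values are the real unit interval of an R : realType. *)
From HB Require Import structures.
From mathcomp Require Import all_boot all_order all_algebra.
From mathcomp Require Import reals.
Set Implicit Arguments. Unset Strict Implicit. Unset Printing Implicit Defensive.
Import Order.TTheory GRing.Theory Num.Theory.
Local Open Scope ring_scope.

Section Goedel.
Variable R : realType.

(* Goedel residuum: z ↙ y = z ↖ y = 1 if y <= z, z otherwise *)
Definition gres (z y : R) : R := if y <= z then 1 else z.

Definition unit_val (x : R) : Prop := 0 <= x /\ x <= 1.

Variables (A B : finType) (Rel : A -> B -> R).

(* infima over finite nonempty index sets of values in [0,1]: min with top 1 *)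
Definition up (g : B -> R) (a : A) : R :=
  \big[Order.min/1]_(b : B) gres (Rel a b) (g b).
Definition down (f : A -> R) (b : B) : R :=
  \big[Order.min/1]_(a : A) gres (Rel a b) (f a).
Definition upN (g : B -> R) (a : A) : R :=
  \big[Order.min/1]_(b : B) gres (g b) (Rel a b).
Definition downN (f : A -> R) (b : B) : R :=
  \big[Order.min/1]_(a : A) gres (f a) (Rel a b).

Definition in_FN (g : B -> R) (f : A -> R) : Prop :=
  (forall a, upN g a = f a) /\ (forall b, downN f b = g b).

Definition is_concept (g : B -> R) (f : A -> R) : Prop :=
  (forall a, up g a = f a) /\ (forall b, down f b = g b).

Definition concept_le (g1 : B -> R) (f1 : A -> R) (g2 : B -> R) (f2 : A -> R) : Prop :=
  forall b, g1 b <= g2 b.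

Definition fuzzy_context : Prop :=
  (0 < #|A|)%N /\ (0 < #|B|)%N /\ forall a b, unit_val (Rel a b).

Definition normalized : Prop :=
  (forall a, exists b, Rel a b != 0) /\
  (forall b, exists a, Rel a b != 0) /\
  (forall a, exists b, Rel a b = 0) /\
  (forall b, exists a, Rel a b = 0).

Definition top_normalized : Prop :=
  normalized /\ forall a, exists b, Rel a b = 1.

End Goedel.

(* Main.v *)
Require Import Defs.
From mathcomp Require Import all_boot all_order all_algebra.
From mathcomp Require Import reals.
Import Order.TTheory GRing.Theory Num.Theory.
Local Open Scope ring_scope.

Section Aux.
Variable R : realType.

Lemma bigminP (I : finType) (F : I -> R) x :
  (x <= \big[Order.min/1]_(i : I) F i) <-> (x <= 1 /\ forall i, x <= F i).
Proof.
have H : forall s : seq I, (x <= \big[Order.min/1]_(i <- s) F i) <->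
   (x <= 1 /\ forall i, i \in s -> x <= F i).
  elim=> [|j s IH]; first by rewrite big_nil; split=> [->|[]//]; split.
  rewrite big_cons le_min; split.
    move=> /andP[h1 /IH [h2 h3]]; split=> // i; rewrite inE => /orP[/eqP->//|]; exact: h3.
  move=> [h1 h2]; apply/andP; split; first by apply: h2; rewrite inE eqxx.
  by apply/IH; split=> // i hi; apply: h2; rewrite inE hi orbT.
split.
  by move/H=> [h1 h2]; split=> // i; apply: h2; exact: mem_index_enum.
by move=> [h1 h2]; apply/H; split.
Qed.

Lemma bigmin_le1 (I : finType) (F : I -> R) : \big[Order.min/1]_(i : I) F i <= 1.
Proof. by have /bigminP[] := lexx (\big[Order.min/1]_(i : I) F i). Qed.

Lemma bigmin_leF (I : finType) (F : I -> R) i : \big[Order.min/1]_(i : I) F i <= F i.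
Proof. by have /bigminP[_ ->] := lexx (\big[Order.min/1]_(i : I) F i). Qed.

Lemma gres_le (z y : R) : z <= 1 -> gres z y <= 1.
Proof. by rewrite /gres; case: ifP. Qed.

Lemma gres_swap (z x y : R) : x <= 1 -> y <= 1 -> x <= gres z y -> y <= gres z x.
Proof.
rewrite /gres => hx hy; case: ifP => hyz; case: ifP => hxz //.
Qed.

Lemma gres_anti (z y1 y2 : R) : z <= 1 -> y1 <= y2 -> gres z y2 <= gres z y1.
Proof.
rewrite /gres => hz h12; case: ifP => h2; case: ifP => h1 //.
by rewrite (le_trans h12 h2) in h1.
Qed.
End Aux.


Section Main.
Variables (R : realType) (A B : finType) (Rel : A -> B -> R).
Hypothesis R1 : forall a b, Rel a b <= 1.

Lemma E1 (f' : A -> R) a : f' a <= 1 -> f' a <= up Rel (down Rel f') a.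
Proof.
move=> h; apply/bigminP; split=> // b.
apply: gres_swap => //; first exact: bigmin_le1.
exact: (@bigmin_leF _ _ (fun a => gres (Rel a b) (f' a)) a).
Qed.

Lemma E2 (h : B -> R) b : h b <= 1 -> h b <= down Rel (up Rel h) b.
Proof.
move=> hb; apply/bigminP; split=> // a.
apply: gres_swap => //; first exact: bigmin_le1.
exact: (@bigmin_leF _ _ (fun b => gres (Rel a b) (h b)) b).
Qed.

Lemma Ad (f1 f2 : A -> R) b : (forall a, f1 a <= f2 a) ->
    down Rel f2 b <= down Rel f1 b.
Proof.
move=> h; apply/bigminP; split; first exact: bigmin_le1.
move=> a; apply: le_trans (@bigmin_leF _ _ (fun a => gres (Rel a b) (f2 a)) a) _.
exact: gres_anti.
Qed.

Lemma Au (g1 g2 : B -> R) a : (forall b, g1 b <= g2 b) ->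
    up Rel g2 a <= up Rel g1 a.
Proof.
move=> h; apply/bigminP; split; first exact: bigmin_le1.
move=> b; apply: le_trans (@bigmin_leF _ _ (fun b => gres (Rel a b) (g2 b)) b) _.
exact: gres_anti.
Qed.

Lemma mainIneq (g : B -> R) (f : A -> R) :
  (forall b, downN Rel f b = g b) ->
  (forall a, exists b, g b > Rel a b) ->
  forall b, down Rel f b <= down Rel (up Rel g) b.
Proof.
move=> hdown hex b; apply/bigminP; split; first exact: bigmin_le1.
move=> a; rewrite /gres; case: ifP => hle; first exact: bigmin_le1.
have hlt : Rel a b < up Rel g a by rewrite ltNge hle.
have hfa : Rel a b < f a.
  rewrite ltNge; apply/negP => hfab.
  have [b0 hb0] := hex a.
  have h1 : up Rel g a <= Rel a b0.
    apply: le_trans (@bigmin_leF _ _ (fun b => gres (Rel a b) (g b)) b0) _.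
    by rewrite /gres (_ : (g b0 <= Rel a b0) = false) // leNgt hb0.
  have h2 : f a < Rel a b0 by apply: le_lt_trans hfab (lt_le_trans hlt h1).
  have h3 : g b0 <= f a.
    rewrite -hdown; apply: le_trans (@bigmin_leF _ _ (fun a => gres (f a) (Rel a b0)) a) _.
    by rewrite /gres (_ : (Rel a b0 <= f a) = false) // leNgt h2.
  by move: (lt_trans (le_lt_trans h3 h2) hb0); rewrite ltxx.
apply: le_trans (@bigmin_leF _ _ (fun a => gres (Rel a b) (f a)) a) _.
by rewrite /gres (_ : (f a <= Rel a b) = false) // leNgt hfa.
Qed.
End Main.

Theorem mainTheorem15 (R : realType) (A B : finType) (Rel : A -> B -> R)
  (g : B -> R) (f : A -> R) :
  fuzzy_context Rel -> top_normalized Rel ->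
  (forall b, unit_val (g b)) -> (forall a, unit_val (f a)) ->
  in_FN Rel g f ->
  (forall a, exists b, g b > Rel a b) ->
  (forall b, down Rel f b <= down Rel (up Rel g) b) /\
  (is_concept Rel (down Rel f) (up Rel (down Rel f)) /\
   is_concept Rel (down Rel (up Rel g)) (up Rel g) /\
   concept_le (down Rel f) (up Rel (down Rel f)) (down Rel (up Rel g)) (up Rel g)).
Proof.
move=> [_ [_ hR]] _ hg hf [hup hdown] hex.
have R1 : forall a b, Rel a b <= 1 by move=> a b; case: (hR a b).
have main := @mainIneq _ _ _ Rel g f hdown hex.
split=> //; split; [|split] => //.
- split=> // b; apply/eqP; rewrite eq_le; apply/andP; split.
    by apply: Ad => // a; apply: E1 => //; case: (hf a).
  by apply: E2 => //; exact: bigmin_le1.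
- split=> // a; apply/eqP; rewrite eq_le; apply/andP; split.
    by apply: Au => // b; apply: E2 => //; case: (hg b).
  by apply: E1 => //; exact: bigmin_le1.
Qed.
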